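(* Let $n\ge3$, let $\boldsymbol\ell=(\ell_1,\ldots,\ell_n)$ be positive lengths, let $\mu\in\mathbb{R}$, and let $\tau$ and $N>0$ be smooth functions on $T^n$ depending only on $s^1$. Consider the conformal data set $(g_{\boldsymbol\ell},\mu\,\sigma^\flat_{\boldsymbol\ell},\tau,N)$. Let $$\tau^*=\frac{\int_{S^1}N\tau\,ds}{\int_{S^1}N\,ds},\qquad \xi=\tau-\tau^*.$$ (1) If $\mu$ and $\tau^*$ are nonzero and have the same sign, then there is a solution $(\phi,W)$ of the CTS-H equations with $\phi\equiv c=(\mu/\tau^* )^{1/q}$, where $W$ is parallel to $\partial_{s^1}$ and $\frac{1}{2N}\mathcal{L}_{g_{\boldsymbol\ell}}W=c^q\xi\,\sigma^\flat_{\boldsymbol\ell}$. The solution of the constraint equations generated by it is $$\bar g=g_{r\boldsymbol\ell},\qquad \bar K=\tau\,(r\ell_1)^2(ds^1)^2,\qquad r=c^{(q-2)/2}=(\mu/\tau^* )^{1/n}.$$ (2) If $\mu=0$ and $\tau^*=0$, then for every $c>0$ there is a solution $(\phi,W)$ of the CTS-H equations with $\phi\equiv c$ and $\frac{1}{2N}\mathcal{L}_{g_{\boldsymbol\ell}}W=c^q\xi\,\sigma^\flat_{\boldsymbol\ell}$, and the associated solution of the constraint equations is $\bar g=g_{r\boldsymbol\ell}$, $\bar K=\tau\,(r\ell_1)^2(ds^1)^2$ with $r=c^{(q-2)/2}$.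
   Context: Let $q=\frac{2n}{n-2}$, $\kappa=\frac{n-1}{n}$. $S^1=\mathbb{R}/\mathbb{Z}$ with unit coordinate $s$ ($\int_{S^1}ds=1$); $T^n=(S^1)^n$ with unit coordinates $(s^1,\ldots,s^n)$; functions of $s^1$ only are identified with functions on $S^1$. $g_{\boldsymbol\ell}=\sum_k\ell_k^2(ds^k)^2$, and $r\boldsymbol\ell=(r\ell_1,\ldots,r\ell_n)$. $\sigma^\flat_{\boldsymbol\ell}=\kappa\ell_1^2(ds^1)^2-\frac1n\sum_{k\ge2}\ell_k^2(ds^k)^2$ (transverse-traceless for $g_{\boldsymbol\ell}$). The conformal Killing operator is $\mathcal{L}_gW=L_Wg-\frac2n(\mathrm{div}_gW)g$. CTS-H method: given $(g,\sigma,\tau,N)$ ($\sigma$ transverse-traceless, $N>0$ a densitized lapse), the CTS-H equations for $\phi>0$ and a vector field $W$ are $$-2\kappa q\Delta_g\phi+R_g\phi-\Big|\sigma+\tfrac{1}{2N}\mathcal{L}_gW\Big|_g^2\phi^{-q-1}+\kappa\tau^2\phi^{q-1}=0,\qquad \mathrm{div}_g\Big(\tfrac{1}{2N}\mathcal{L}_gW\Big)=\kappa\phi^q d\tau,$$ and a solution generates the solution $\bar g=\phi^{q-2}g$, $\bar K=\phi^{-2}(\sigma+\frac{1}{2N}\mathcal{L}_gW)+\frac{\tau}{n}\bar g$ of the Einstein constraint equations $R_{\bar g}-|\bar K|^2+(\mathrm{tr}\bar K)^2=0$, $\mathrm{div}_{\bar g}\bar K=d\,\mathrm{tr}_{\bar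 g}\bar K$. *)

(* Defs.v *)
(* T^n = R^n / Z^n: functions / tensor fields on T^n are Z^n-periodic component
   functions in the global coordinates (s^1,...,s^n) (index 0 <-> s^1). *)
From HB Require Import structures.
From mathcomp Require Import all_boot all_order all_algebra.
From mathcomp Require Import all_classical all_reals all_analysis.
Set Implicit Arguments. Unset Strict Implicit. Unset Printing Implicit Defensive.
Import Order.TTheory GRing.Theory Num.Theory.
Import numFieldNormedType.Exports.
Local Open Scope ring_scope.

Section Geom.
Variables (R : realType) (n : nat).

Definition pt := 'rV[R]_n.
Definition fld := pt -> R.
Definition vfield := 'I_n -> fld.
Definition oneform := 'I_n -> fld.
Definition tensor2 := 'I_n -> 'I_n -> fld.

Definition evec (i : 'I_n) : pt := delta_mx 0 i.

Definition pd (i : 'I_n) (f : fld) : fld := fun x => derive f x (evec i).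

Fixpoint iterD (s : seq 'I_n) (f : fld) : fld :=
  match s with [::] => f | i :: s' => pd i (iterD s' f) end.

Definition smooth (f : fld) : Prop := forall s x, differentiable (iterD s f) x.

Definition periodic (f : fld) : Prop := forall x i, f (x + evec i) = f x.

Definition smooth_on_torus (f : fld) : Prop := smooth f /\ periodic f.

Definition only_s1 (f : fld) : Prop :=
  forall x y : pt, (forall i : 'I_n, (i : nat) = 0%N -> x 0 i = y 0 i) -> f x = f y.

Definition s1pt (s : R) : pt := \row_i (if (i : nat) == 0%N then s else 0).

Definition intS1 (f : fld) : R :=
  (\int[lebesgue_measure]_(s in `[0%R, 1%R]) f (s1pt s))%R.

Definition gmx (g : tensor2) (x : pt) : 'M[R]_n := \matrix_(i, j) g i j x.
Definition ginv (g : tensor2) : tensor2 := fun i j x => invmx (gmx g x) i j.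

Definition Gamma (g : tensor2) (k i j : 'I_n) : fld := fun x =>
  2^-1 * \sum_l ginv g k l x *
     (pd i (g j l) x + pd j (g i l) x - pd l (g i j) x).

Definition Ricci (g : tensor2) : tensor2 := fun i j x =>
  \sum_k (pd k (Gamma g k i j) x - pd j (Gamma g k i k) x)
  + \sum_k \sum_l (Gamma g k k l x * Gamma g l i j x
                   - Gamma g k j l x * Gamma g l i k x).

Definition scal (g : tensor2) : fld := fun x =>
  \sum_i \sum_j ginv g i j x * Ricci g i j x.

Definition laplacian (g : tensor2) (f : fld) : fld := fun x =>
  \sum_i \sum_j ginv g i j x *
    (pd i (pd j f) x - \sum_k Gamma g k i j x * pd k f x).

Definition divW (g : tensor2) (W : vfield) : fld := fun x =>
  \sum_i pd i (W i) x + \sum_i \sum_k Gamma g i i k x * W k x.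

Definition lieg (g : tensor2) (W : vfield) : tensor2 := fun i j x =>
  \sum_k (W k x * pd k (g i j) x + g k j x * pd i (W k) x
          + g i k x * pd j (W k) x).

Definition confKilling (g : tensor2) (W : vfield) : tensor2 := fun i j x =>
  lieg g W i j x - 2 / n%:R * divW g W x * g i j x.

(* divergence of a covariant symmetric 2-tensor: (div h)_j = g^{ik} nabla_k h_ij *)
Definition div2 (g : tensor2) (h : tensor2) : oneform := fun j x =>
  \sum_i \sum_k ginv g i k x *
    (pd k (h i j) x - \sum_l Gamma g l k i x * h l j x
                    - \sum_l Gamma g l k j x * h i l x).

Definition norm2 (g : tensor2) (h : tensor2) : fld := fun x =>
  \sum_i \sum_j \sum_a \sum_b ginv g i a x * ginv g j b x * h i j x * h a b x.

Definition trace (g : tensor2) (h : tensor2) : fld := fun x =>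
  \sum_i \sum_j ginv g i j x * h i j x.

Definition dform (f : fld) : oneform := fun i => pd i f.

Definition qexp : R := (2 * n%:R) / (n%:R - 2).
Definition kappa : R := (n%:R - 1) / n%:R.

Definition ctsh_A (g sigma : tensor2) (N : fld) (W : vfield) : tensor2 :=
  fun i j x => sigma i j x + (2 * N x)^-1 * confKilling g W i j x.

Definition CTSH (g sigma : tensor2) (tau N : fld) (phi : fld) (W : vfield) : Prop :=
  (forall x,
     - (2 * kappa * qexp) * laplacian g phi x + scal g x * phi x
     - norm2 g (ctsh_A g sigma N W) x * powR (phi x) (- qexp - 1)
     + kappa * tau x ^+ 2 * powR (phi x) (qexp - 1) = 0) /\
  (forall j x,
     div2 g (fun a b y => (2 * N y)^-1 * confKilling g W a b y) j x
     = kappa * powR (phi x) qexp * dform tau j x).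

Definition gen_g (g : tensor2) (phi : fld) : tensor2 :=
  fun i j x => powR (phi x) (qexp - 2) * g i j x.
Definition gen_K (g sigma : tensor2) (tau N phi : fld) (W : vfield) : tensor2 :=
  fun i j x => powR (phi x) (-2) * ctsh_A g sigma N W i j x
               + tau x / n%:R * gen_g g phi i j x.

Definition constraint_eqs (g K : tensor2) : Prop :=
  (forall x, scal g x - norm2 g K x + trace g K x ^+ 2 = 0) /\
  (forall j x, div2 g K j x = dform (trace g K) j x).

Definition gell (l : 'I_n -> R) : tensor2 :=
  fun i j _ => if i == j then l i ^+ 2 else 0.

Definition sigma_flat (l : 'I_n -> R) : tensor2 :=
  fun i j _ => if i == j then
                 (if (i : nat) == 0%N then kappa * l i ^+ 2 else - n%:R^-1 * l i ^+ 2)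
               else 0.

Definition ds1sq (f : fld) (a : R) : tensor2 :=
  fun i j x => if (i == j) && ((i : nat) == 0%N) then f x * a ^+ 2 else 0.

Definition scaleL (r : R) (l : 'I_n -> R) : 'I_n -> R := fun i => r * l i.

Definition l1 (l : 'I_n -> R) : R := \sum_(i < n | (i : nat) == 0%N) l i.

Definition scale2 (c : R) (f : fld) (h : tensor2) : tensor2 :=
  fun i j x => c * f x * h i j x.

End Geom.

(* Main.v *)
Require Import Defs.
From HB Require Import structures.
From mathcomp Require Import all_boot all_order all_algebra.
From mathcomp Require Import all_classical all_reals all_analysis.
From mathcomp Require Import ring lra.
Import Order.TTheory GRing.Theory Num.Theory.
Import numFieldNormedType.Exports.
Set Implicit Arguments. Unset Strict Implicit. Unset Printing Implicit Defensive.
Local Open Scope ring_scope.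
Local Open Scope classical_set_scope.

Section OneD.
Context {R : realType}.
Notation mu := (@lebesgue_measure R).

Lemma zero_deriv_cst (f : R -> R) (a x y : R) :
  (forall t, a < t -> derivable f t 1 /\ f^`() t = 0) -> a < x -> a < y -> f x = f y.
Proof.
move=> hf.
wlog xy : x y / x <= y.
  move=> H ax ay; case: (lerP x y) => [le|/ltW le]; first exact: H.
  by symmetry; apply: H.
move=> ax ay.
have H1 : forall z, z \in `]x, y[%R -> is_derive z 1 f ((fun=> 0) z).
  move=> z; rewrite in_itv /= => /andP[xz _].
  have [d d0] := hf z (lt_trans ax xz).
  by apply: DeriveDef => //; rewrite -derive1E.
have H2 : {within `[x, y], continuous f}.
  apply: derivable_within_continuous => z; rewrite in_itv /= => /andP[xz _].
  by have [] := hf z (lt_le_trans ax xz).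
have [c _] := MVT_segment xy H1 H2.
by rewrite mul0r => /eqP; rewrite subr_eq0 => /eqP.
Qed.

Definition Gk (h : R -> R) (k : nat) (x : R) : R :=
  (\int[mu]_(t in [set` `[- k.+1%:R, x]]) h t)%R.

Lemma Gk_deriv h k x : continuous h -> - k.+1%:R < x ->
  derivable (Gk h k) x 1 /\ (Gk h k)^`() x = h x.
Proof.
move=> ch kx.
apply: (@continuous_FTC1_closed R h (- k.+1%:R) x (x + 1)) => //.
- by rewrite ltrDl.
- apply: continuous_compact_integrable; first exact: segment_compact.
  exact: continuous_subspaceT.
exact: ch.
Qed.

Definition kof (s : R) : nat := Num.bound `|s|.

Lemma kof_lt s : - (kof s).+1%:R < s.
Proof.
have := archi_boundP (normr_ge0 s); rewrite -/(kof s) => hs.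
have : - (kof s)%:R < s.
  by rewrite ltrNl; apply: le_lt_trans hs; rewrite -normrN ler_norm.
apply: le_lt_trans; rewrite lerN2 ler_nat; exact: leqnSn.
Qed.

Definition Anti (h : R -> R) (s : R) : R := Gk h (kof s) s - Gk h (kof s) 0.

Lemma Gk_indep h k m s : continuous h -> - k.+1%:R < s -> - m.+1%:R < s ->
  Gk h k s - Gk h k 0 = Gk h m s - Gk h m 0.
Proof.
move=> ch ks ms.
pose a : R := Num.max (- k.+1%:R) (- m.+1%:R).
have hD : forall t, a < t -> derivable (Gk h m - Gk h k) t 1 /\ (Gk h m - Gk h k)^`() t = 0.
  move=> t; rewrite /a gt_max => /andP[kt mt].
  have [dk ek] := Gk_deriv ch kt; have [dm em] := Gk_deriv ch mt.
  split; first exact: (derivableB dm dk).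
  by rewrite derive1E (deriveB dm dk) -!derive1E ek em subrr.
have a0 : a < 0 by rewrite /a gt_max !oppr_lt0 !ltr0Sn.
have as_ : a < s by rewrite /a gt_max ks ms.
have := zero_deriv_cst hD as_ a0 => E.
have E' : Gk h m s - Gk h k s = Gk h m 0 - Gk h k 0 := E.
move: E'; move: (Gk h m s) (Gk h k s) (Gk h m 0) (Gk h k 0) => A B C D E'.
lra.
Qed.

Lemma Anti_deriv h s : continuous h -> derivable (Anti h) s 1 /\ (Anti h)^`() s = h s.
Proof.
move=> ch; set k := kof s.
have [dk ek] := Gk_deriv ch (kof_lt s).
have dc := @derivable_cst R R R (Gk h k 0) s 1.
have hd : is_derive s 1 (Gk h k - cst (Gk h k 0)) (h s).
  apply: DeriveDef; first exact: (derivableB dk dc).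
  by rewrite (deriveB dk dc) derive_cst subr0 -derive1E.
have hn : \forall t \near s, (Gk h k - cst (Gk h k 0)) t = Anti h t.
  near=> t.
  change (Gk h k t - Gk h k 0 = Gk h (kof t) t - Gk h (kof t) 0).
  apply: (Gk_indep ch) ; last exact: kof_lt.
  near: t. exact: (lt_nbhsr (kof_lt s)).
have := @near_eq_is_derive R R R (Gk h k - cst (Gk h k 0)) (Anti h) s 1 (h s) hn hd.
move=> [d e]; split; first exact: d.
by rewrite derive1E.
Unshelve. all: by end_near. Qed.


Lemma deriv_cont (F : R -> R) x : derivable F x 1 -> {for x, continuous F}.
Proof. by move=> /derivable1_diffP /differentiable_continuous. Qed.

Lemma FTC01 (h F : R -> R) : continuous h ->
  (forall s, derivable F s 1 /\ F^`() s = h s) ->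
  (\int[mu]_(s in `[0, 1]) h s)%R = F 1 - F 0.
Proof.
move=> ch dF.
have dF' : derivable_oo_LRcontinuous F 0 1.
  split.
  - by move=> x _; have [] := dF x.
  - by apply: cvg_at_right_filter; apply: deriv_cont; have [] := dF 0.
  - by apply: cvg_at_left_filter; apply: deriv_cont; have [] := dF 1.
have := @continuous_FTC2 R h F 0 1 ltr01 (continuous_subspaceT ch) dF'.
have e : {in `]0, 1[%R, F^`() =1 h} by move=> x _; have [] := dF x.
move=> /(_ e) E.
by rewrite /Rintegral E -EFinB.
Qed.

Lemma derive_shift1 (F : R -> R) (t : R) :
  (derivable (fun s : R => F (s + 1)) t 1 <-> derivable F (t + 1) 1) /\
  'D_1 (fun s : R => F (s + 1)) t = 'D_1 F (t + 1).
Proof.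
have E : (fun h : R => h^-1 *: (((fun s : R => F (s + 1)) \o shift t) (h *: 1) - F (t + 1)))
  = (fun h : R => h^-1 *: ((F \o shift (t + 1)) (h *: 1) - F (t + 1))).
  by apply/funext => h /=; rewrite addrA.
by rewrite /derivable /derive E.
Qed.

Lemma periodic_anti (F h : R -> R) :
  (forall s, derivable F s 1 /\ F^`() s = h s) -> (forall s, h (s + 1) = h s) ->
  F 1 = F 0 -> forall s, F (s + 1) = F s.
Proof.
move=> dF hp F10 s.
pose D := fun t => F (t + 1) - F t.
have hD : forall t, Num.min s 0 - 1 < t -> derivable D t 1 /\ D^`() t = 0.
  move=> t _.
  have [[_ d1] e1] := derive_shift1 F t.
  have [dt et] := dF t; have [dt1 et1] := dF (t + 1).
  have d1' := d1 dt1.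
  split; first exact: (derivableB d1' dt).
  rewrite derive1E (deriveB d1' dt) e1 -!derive1E et et1 hp subrr //.
have h1 : Num.min s 0 - 1 < s by rewrite ltrBlDr (le_lt_trans (y:=s))// ?ge_min ?lexx ?ltrDl.
have h2 : Num.min s 0 - 1 < 0 by rewrite ltrBlDr (le_lt_trans (y:=0))// ?ge_min ?lexx ?orbT ?ltrDl.
have := zero_deriv_cst hD h1 h2.
rewrite /D add0r F10 subrr => /eqP.
by rewrite subr_eq0 => /eqP.
Qed.

Lemma anti_pos (F N : R -> R) :
  (forall s, derivable F s 1 /\ F^`() s = N s) -> (forall s, 0 < N s) -> 0 < F 1 - F 0.
Proof.
move=> dF Np.
have H1 : forall z : R, z \in `]0, 1[%R -> is_derive z 1 F (N z).
  move=> z _; have [d e] := dF z.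
  by apply: DeriveDef => //; rewrite -derive1E.
have H2 : {within `[0, 1], continuous F}.
  by apply: derivable_within_continuous => z _; have [] := dF z.
have [c _ ->] := MVT ltr01 H1 H2.
by rewrite subr0 mulr1.
Qed.
End OneD.

Section Smooth.
Context {R : realType} {n : nat}.
Local Notation fld := (fld R n).

Lemma iterD_rcons s i (f : fld) : Defs.iterD (rcons s i) f = Defs.iterD s (pd i f).
Proof. by elim: s => //= j s ->. Qed.

Lemma pd_cst i (c : R) : pd i (fun _ : pt R n => c) = fun _ => 0.
Proof. by apply/funext => x; exact: derive_cst. Qed.

Definition ksmooth k (f : fld) :=
  forall s, (size s <= k)%N -> forall x, differentiable (Defs.iterD s f) x.

Lemma iterD_cst s (c : R) : exists c', Defs.iterD s (fun _ : pt R n => c) = fun _ => c'.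
Proof.
elim: s => [|i s [c' IH]] /=; first by exists c.
by exists 0; rewrite IH; exact: pd_cst.
Qed.

Lemma smooth_cst (c : R) : smooth (fun _ : pt R n => c).
Proof. by move=> s x; have [c' ->] := iterD_cst s c; exact: differentiable_cst. Qed.

Lemma pd_add i (f g : fld) x : differentiable f x -> differentiable g x ->
  pd i (fun y => f y + g y) x = pd i f x + pd i g x.
Proof.
move=> df dg; rewrite /pd.
have d1 : derivable f x (evec R i) := diff_derivable df.
have d2 : derivable g x (evec R i) := diff_derivable dg.
exact: (deriveD d1 d2).
Qed.

Lemma pd_mul i (f g : fld) x : differentiable f x -> differentiable g x ->
  pd i (fun y => f y * g y) x = f x * pd i g x + g x * pd i f x.
Proof.
move=> df dg; rewrite /pd.
have d1 : derivable f x (evec R i) := diff_derivable df.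
have d2 : derivable g x (evec R i) := diff_derivable dg.
exact: (deriveM d1 d2).
Qed.

Lemma iterD_add k (f g : fld) : ksmooth k f -> ksmooth k g ->
  forall s, (size s <= k)%N ->
  Defs.iterD s (fun y => f y + g y) = fun y => Defs.iterD s f y + Defs.iterD s g y.
Proof.
move=> hf hg; elim => [//|i s IH] /= hs.
rewrite IH; last exact: ltnW.
apply/funext => x; apply: pd_add.
- by apply: hf; exact: ltnW.
- by apply: hg; exact: ltnW.
Qed.

Lemma ksmooth_add k (f g : fld) : ksmooth k f -> ksmooth k g ->
  ksmooth k (fun y => f y + g y).
Proof.
move=> hf hg s hs x; rewrite (iterD_add hf hg hs).
exact: (differentiableD (hf s hs x) (hg s hs x)).
Qed.

Lemma smooth_pd i (f : fld) : smooth f -> smooth (pd i f).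
Proof. by move=> sf s x; rewrite -iterD_rcons; exact: sf. Qed.

Lemma smooth_diff (f : fld) x : smooth f -> differentiable f x.
Proof. by move=> sf; exact: (sf [::] x). Qed.

Lemma smooth_of_pd (f : fld) : (forall x, differentiable f x) ->
  (forall i, smooth (pd i f)) -> smooth f.
Proof.
move=> df sp s; case/lastP: s => [|s i]; first exact: df.
by rewrite iterD_rcons; exact: sp.
Qed.

Lemma smooth_ksmooth k (f : fld) : smooth f -> ksmooth k f.
Proof. by move=> sf s _; exact: sf. Qed.

Lemma smooth_add (f g : fld) : smooth f -> smooth g -> smooth (fun y => f y + g y).
Proof.
move=> sf sg s.
exact: (ksmooth_add (smooth_ksmooth (k:=size s) sf) (smooth_ksmooth (k:=size s) sg) (leqnn _)).
Qed.

Lemma ksmooth_mul k : forall (f g : fld), smooth f -> smooth g ->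
  ksmooth k (fun y => f y * g y).
Proof.
elim: k => [|k IH] f g sf sg s.
  case: s => // _ x /=.
  exact: (differentiableM (smooth_diff x sf) (smooth_diff x sg)).
case/lastP: s => [|s i] hs x.
  exact: (differentiableM (smooth_diff x sf) (smooth_diff x sg)).
rewrite iterD_rcons.
have -> : pd i (fun y => f y * g y) = fun y => f y * pd i g y + g y * pd i f y.
  by apply/funext => y; apply: pd_mul; exact: smooth_diff.
move: hs; rewrite size_rcons ltnS => hs.
apply: (ksmooth_add _ _ hs).
- exact: (IH _ _ sf (smooth_pd i sg)).
- exact: (IH _ _ sg (smooth_pd i sf)).
Qed.

Lemma smooth_mul (f g : fld) : smooth f -> smooth g -> smooth (fun y => f y * g y).
Proof. by move=> sf sg s; exact: (@ksmooth_mul (size s) f g sf sg _ (leqnn _)). Qed.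

End Smooth.

Lemma sum_cst_ord {R : realType} k (c : R) : \sum_(i < k) c = c *+ k.
Proof. by elim: k => [|k IH]; rewrite ?big_ord0 // big_ord_recr /= IH mulrS addrC. Qed.

Section Geo.
Context {R : realType} {m : nat}.
Local Notation n := m.+1.
Local Notation fld := (fld R n).

Lemma val0 (i : 'I_n) : ((i : nat) == 0%N) = (i == ord0).
Proof. by []. Qed.

Lemma derive_flat (f : fld) (x v : pt R n) :
  (forall h : R, f (h *: v + x) = f x) -> derive f x v = 0.
Proof.
move=> hf.
have E : (fun h : R => h^-1 *: ((f \o shift x) (h *: v) - f x))
       = (fun h : R => h^-1 *: ((cst (f x) \o shift x) (h *: v) - cst (f x) x)).
  by apply/funext => h /=; rewrite hf.
transitivity (derive (cst (f x)) x v); first by rewrite /derive E.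
exact: derive_cst.
Qed.

Lemma evecE (i j : 'I_n) : evec R i 0 j = (i == j)%:R.
Proof. by rewrite /evec mxE eqxx /= eq_sym. Qed.

Lemma pd_s1 (f : fld) i x : only_s1 f -> i != ord0 -> pd i f x = 0.
Proof.
move=> hf hi; apply: derive_flat => h; apply: hf => j j0.
have -> : j = ord0 by apply: val_inj.
by rewrite !mxE eqxx /= eq_sym (negbTE hi) mulr0 add0r.
Qed.

Lemma s1ptE (f : fld) x : only_s1 f -> f x = f (s1pt n (x 0 ord0)).
Proof.
move=> hf; apply: hf => j j0.
have -> : j = ord0 by apply: val_inj.
by rewrite mxE.
Qed.

Lemma invmx_diag (d : 'rV[R]_n) : (forall i, d 0 i != 0) ->
  invmx (diag_mx d) = diag_mx (\row_i (d 0 i)^-1).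
Proof.
move=> hd.
have E : diag_mx d *m diag_mx (\row_i (d 0 i)^-1) = 1%:M.
  rewrite mulmx_diag; apply/matrixP => i j; rewrite !mxE.
  by case: eqVneq => [->|]; rewrite ?mulr1n ?mulfV ?mulr0n.
have [u _] := mulmx1_unit E.
by rewrite -[invmx _]mulmx1 -E mulmxA mulVmx // mul1mx.
Qed.

Variable L : 'I_n -> R.
Hypothesis hL : forall i, L i != 0.

Lemma ginvE a b x : ginv (gell L) a b x = if a == b then (L a ^+ 2)^-1 else 0.
Proof.
have E : gmx (gell L) x = diag_mx (\row_i L i ^+ 2).
  by apply/matrixP => i j; rewrite !mxE /gell; case: eqVneq => [->|]; rewrite ?mulr1n ?mulr0n.
rewrite /ginv E invmx_diag; last by move=> i; rewrite mxE expf_neq0.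
by rewrite !mxE; case: eqVneq => [->|]; rewrite ?mulr1n ?mulr0n.
Qed.


Lemma sum_only (F : 'I_n -> R) i : (forall j, j != i -> F j = 0) -> \sum_j F j = F i.
Proof. by move=> hF; rewrite (bigD1 i) //= big1 ?addr0 // => j /hF. Qed.

Lemma pd_gell k a b : pd k (gell L a b) = fun _ => 0.
Proof. exact: pd_cst. Qed.

Lemma Gamma0 k i j : Gamma (gell L) k i j = fun _ => 0.
Proof.
apply/funext => x; rewrite /Gamma big1 ?mulr0 // => l _.
by rewrite !pd_gell /= addr0 subrr mulr0.
Qed.

Lemma Ricci0 i j x : Ricci (gell L) i j x = 0.
Proof.
rewrite /Ricci big1 ?add0r; last by move=> k _; rewrite !Gamma0 !pd_cst subrr.
by rewrite big1 // => k _; rewrite big1 // => l _; rewrite !Gamma0 mul0r subrr.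
Qed.

Lemma scal0 x : scal (gell L) x = 0.
Proof. by rewrite /scal big1 // => i _; rewrite big1 // => j _; rewrite Ricci0 mulr0. Qed.

Lemma lap_cst (c : R) x : laplacian (gell L) (fun _ => c) x = 0.
Proof.
rewrite /laplacian big1 // => i _; rewrite big1 // => j _.
rewrite !pd_cst big1 ?subrr ?mulr0 // => k _.
by rewrite Gamma0 mul0r.
Qed.

Lemma norm2_diag (h : tensor2 R n) x :
  (forall a b, a != b -> h a b x = 0) ->
  norm2 (gell L) h x = \sum_i ((L i ^+ 2)^-1 * h i i x) ^+ 2.
Proof.
move=> hoff; rewrite /norm2; apply: eq_bigr => i _.
rewrite (sum_only (i := i)); last first.
  move=> j ji; rewrite big1 // => a _; rewrite big1 // => b _.
  by rewrite (hoff i j) ?mulr0 ?mul0r // eq_sym.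
rewrite (sum_only (i := i)); last first.
  by move=> a ai; rewrite big1 // => b _; rewrite ginvE eq_sym (negbTE ai) !mul0r.
rewrite (sum_only (i := i)); last first.
  by move=> b bi; rewrite [ginv _ i b x]ginvE eq_sym (negbTE bi) !mulr0 !mul0r.
by rewrite ginvE eqxx; ring.
Qed.

Lemma trace_diag (h : tensor2 R n) x :
  trace (gell L) h x = \sum_i (L i ^+ 2)^-1 * h i i x.
Proof.
rewrite /trace; apply: eq_bigr => i _.
rewrite (sum_only (i := i)) ?ginvE ?eqxx // => j ji.
by rewrite ginvE eq_sym (negbTE ji) mul0r.
Qed.

Lemma div2_diag (h : tensor2 R n) j x :
  (forall a b, a != b -> h a b = fun _ => 0) ->
  div2 (gell L) h j x = (L j ^+ 2)^-1 * pd j (h j j) x.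
Proof.
move=> hoff; rewrite /div2.
have G0 : forall k i, \sum_l Gamma (gell L) l k i x * h l j x = 0.
  by move=> k i; rewrite big1 // => l _; rewrite Gamma0 mul0r.
have G1 : forall k i, \sum_l Gamma (gell L) l k j x * h i l x = 0.
  by move=> k i; rewrite big1 // => l _; rewrite Gamma0 mul0r.
rewrite (sum_only (i := j)); last first.
  move=> i ij; rewrite big1 // => k _.
  by rewrite G0 G1 (hoff i j ij) pd_cst !subr0 mulr0.
rewrite (sum_only (i := j)); last first.
  by move=> k kj; rewrite ginvE eq_sym (negbTE kj) mul0r.
by rewrite G0 G1 !subr0 ginvE eqxx.
Qed.


Lemma pd_lin j (g : fld) (a b : R) x : differentiable g x ->
  pd j (fun y => a * g y + b) x = a * pd j g x.
Proof.
move=> dg; rewrite /pd.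
have d1 : derivable g x (evec R j) := diff_derivable dg.
have E : (fun y => a * g y + b) = (a \*: g + cst b) by [].
rewrite E; have [_ ->] := is_deriveD (is_deriveZ a (derivableP d1)) (is_derive_cst b x (evec R j)).
by rewrite addr0.
Qed.

Lemma lift0_neq (i : 'I_m) : (lift ord0 i == ord0) = false.
Proof. by []. Qed.

Lemma norm_sigma (a0 : fld) x :
  norm2 (gell L) (fun a b y => a0 y * sigma_flat L a b y) x = a0 x ^+ 2 * kappa R n.
Proof.
rewrite norm2_diag; last first.
  by move=> a b hab; rewrite /sigma_flat (negbTE hab) mulr0.
rewrite big_ord_recl /sigma_flat eqxx /=.
rewrite (eq_bigr (fun _ => (a0 x ^+ 2 / n%:R ^+ 2 : R))); last first.
  move=> i _; have hi := hL (lift ord0 i).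
  move: (a0 x) (L (lift ord0 i)) hi => A Li hi.
  rewrite eqxx /= -natr1; field; by rewrite natr1 pnatr_eq0 hi.
rewrite sum_cst_ord -mulr_natr /kappa.
have h0 := hL ord0.
rewrite -natr1.
field.
by rewrite natr1 pnatr_eq0 h0.
Qed.

Lemma ds1_off (tau : fld) a0 a b : a != b -> ds1sq tau a0 a b = fun _ => 0.
Proof. by move=> hab; apply/funext => y; rewrite /ds1sq (negbTE hab). Qed.

Lemma trace_ds1 (tau : fld) x : trace (gell L) (ds1sq tau (L ord0)) x = tau x.
Proof.
rewrite trace_diag big_ord_recl big1 ?addr0; last by move=> i _; rewrite /ds1sq eqxx /= mulr0.
rewrite /ds1sq eqxx /=.
have h0 := hL ord0.
by field.
Qed.

Lemma constraint_ds1 (tau : fld) : smooth tau -> only_s1 tau ->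
  constraint_eqs (gell L) (ds1sq tau (L ord0)).
Proof.
move=> st ot; split => [x|j x].
  rewrite scal0 trace_ds1 norm2_diag; last by move=> a b hab; rewrite (ds1_off _ _ hab).
  rewrite big_ord_recl big1 ?addr0; last by move=> i _; rewrite /ds1sq eqxx /= mulr0 expr0n.
  rewrite /ds1sq eqxx /=.
  have h0 := hL ord0.
  by field.
rewrite div2_diag; last by move=> a b hab; exact: ds1_off.
have -> : trace (gell L) (ds1sq tau (L ord0)) = tau by apply/funext => y; exact: trace_ds1.
rewrite /dform.
case: (eqVneq j ord0) => [->|hj].
  have -> : ds1sq tau (L ord0) ord0 ord0 = fun y => L ord0 ^+ 2 * tau y + 0.
    by apply/funext => y; rewrite /ds1sq eqxx /= addr0 mulrC.
  rewrite pd_lin; last exact: smooth_diff.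
  have h0 := hL ord0.
  by field.
have -> : ds1sq tau (L ord0) j j = fun _ => 0.
  by apply/funext => y; rewrite /ds1sq eqxx val0 (negbTE hj).
by rewrite pd_cst (pd_s1 _ ot hj) mulr0.
Qed.
End Geo.

Section Anti.
Context {R : realType} {m : nat}.
Local Notation n := m.+1.
Local Notation fld := (fld R n).

Lemma s1pt_scale (s : R) : s1pt n s = s *: s1pt n 1.
Proof. by apply/matrixP => i j; rewrite !mxE; case: ifP; rewrite ?mulr1 ?mulr0. Qed.

Lemma s1_continuous (f : fld) : smooth f -> continuous (fun s : R => f (s1pt n s)).
Proof.
move=> sf s.
have -> : (fun s : R => f (s1pt n s)) = f \o ( *:%R^~ (s1pt n 1)).
  by apply/funext => t /=; rewrite s1pt_scale.
apply: continuous_comp; first exact: scalel_continuous.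
exact/differentiable_continuous/smooth_diff.
Qed.

Lemma anti_field (F : R -> R) (f : fld) : smooth f -> only_s1 f ->
  (forall s, derivable F s 1 /\ F^`() s = f (s1pt n s)) ->
  (forall s, F (s + 1) = F s) ->
  smooth_on_torus (fun x : pt R n => F (x 0 ord0)) /\
  pd ord0 (fun x : pt R n => F (x 0 ord0)) = f /\
  (forall i, i != ord0 -> pd i (fun x : pt R n => F (x 0 ord0)) = fun _ => 0).
Proof.
move=> sf hf dF pF.
set W0 := fun x : pt R n => F (x 0 ord0).
have P0 : pd ord0 W0 = f.
  apply/funext => x.
  have [_ e] := dF (x 0 ord0).
  rewrite (s1ptE x hf) -e derive1E /pd /derive.
  congr (lim (_ @ 0^')); apply/funext => h /=.
  by rewrite /W0 !mxE eqxx /= -[h%:A]/(h * 1).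
have Pi : forall i, i != ord0 -> pd i W0 = fun _ => 0.
  move=> i hi; apply/funext => x; apply: derive_flat => h.
  by rewrite /W0 !mxE eqxx /= eq_sym (negbTE hi) mulr0 add0r.
split; last by [].
split.
  apply: smooth_of_pd.
    move=> x; apply: (differentiable_comp (f := fun N : pt R n => N 0 ord0) (g := F)).
      exact: differentiable_coord.
    by apply/derivable1_diffP; have [] := dF (x 0 ord0).
  move=> i; case: (eqVneq i ord0) => [->|hi]; first by rewrite P0.
  by rewrite (Pi i hi); exact: smooth_cst.
move=> x i; rewrite /W0 !mxE eqxx /=.
by case: (ord0 == i); rewrite /= ?mulr1n ?mulr0n ?addr0 // pF.
Qed.

End Anti.

Section Core.
Context {R : realType} {m : nat}.
Local Notation n := m.+1.
Local Notation fld := (fld R n).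

Lemma s1pt_shift (s : R) : s1pt n (s + 1) = s1pt n s + evec R ord0.
Proof.
apply/matrixP => i j; rewrite !mxE (ord1 i) eqxx /= -val0.
by case: (_ == 0%N) => /=; rewrite ?mulr1n ?mulr0n ?addr0 ?add0r.
Qed.

Lemma exists_anti (f : fld) : smooth f ->
  exists A : R -> R, forall s, derivable A s 1 /\ A^`() s = f (s1pt n s).
Proof.
move=> sf; exists (Anti (fun s => f (s1pt n s))) => s.
exact: (Anti_deriv s (s1_continuous sf)).
Qed.

Lemma core_W (mu : R) (tau N : fld) (K taus : R)
  (htau : smooth_on_torus tau) (htau1 : only_s1 tau)
  (hN : smooth_on_torus N) (hN1 : only_s1 N)
  (hz : intS1 (fun x => N x * tau x) = taus * intS1 N) :
  let f := fun x => K * (N x * tau x + (- taus) * N x) in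
  exists W0 : fld, smooth_on_torus W0 /\ pd ord0 W0 = f /\
    (forall i, i != ord0 -> pd i W0 = fun _ => 0).
Proof.
move=> f.
have sNt : smooth (fun x => N x * tau x) := smooth_mul hN.1 htau.1.
have [A1 dA1] := exists_anti sNt.
have [A2 dA2] := exists_anti hN.1.
have I1 : intS1 (fun x => N x * tau x) = A1 1 - A1 0.
  exact: (FTC01 (s1_continuous sNt) dA1).
have I2 : intS1 N = A2 1 - A2 0.
  exact: (FTC01 (s1_continuous hN.1) dA2).
have sf : smooth f.
  apply: (smooth_mul (f := fun _ => K) (g := fun x => N x * tau x + (- taus) * N x)).
    exact: smooth_cst.
  apply: (smooth_add (f := fun x => N x * tau x) (g := fun x => (- taus) * N x)) => //.
  apply: (smooth_mul (f := fun _ => - taus) (g := N)); [exact: smooth_cst|exact: hN.1].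
have o_f : only_s1 f by move=> x y hxy; rewrite /f (htau1 x y hxy) (hN1 x y hxy).
pose F : R -> R := fun s => K * (A1 s + (- taus) * A2 s).
have dF : forall s, derivable F s 1 /\ F^`() s = f (s1pt n s).
  move=> s; have [d1 e1] := dA1 s; have [d2 e2] := dA2 s.
  have i1 : is_derive s 1 A1 (N (s1pt n s) * tau (s1pt n s)).
    by apply: DeriveDef => //; rewrite -derive1E.
  have i2 : is_derive s 1 A2 (N (s1pt n s)).
    by apply: DeriveDef => //; rewrite -derive1E.
  have i3 := is_deriveZ K (is_deriveD i1 (is_deriveZ (- taus) i2)).
  have i4 : is_derive s 1 F (f (s1pt n s)) := i3.
  by split; [exact: (@ex_derive _ _ _ _ _ _ _ i4) | rewrite derive1E (@derive_val _ _ _ _ _ _ _ i4)].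
have pf : forall s, f (s1pt n s + evec R ord0) = f (s1pt n s).
  by move=> s; rewrite /f htau.2 hN.2.
have hper : forall s, (fun s => f (s1pt n s)) (s + 1) = (fun s => f (s1pt n s)) s.
  by move=> s /=; rewrite s1pt_shift pf.
have F10 : F 1 = F 0.
  apply/eqP; rewrite -subr_eq0; apply/eqP.
  rewrite /F -mulrBr.
  have -> : A1 1 + - taus * A2 1 - (A1 0 + - taus * A2 0) = (A1 1 - A1 0) - taus * (A2 1 - A2 0) by ring.
  by rewrite -I1 -I2 hz subrr mulr0.
have pF := periodic_anti dF hper F10.
have [sW [P0 Pi]] := anti_field sf o_f dF pF.
by exists (fun x : pt R n => F (x 0 ord0)).
Qed.


Lemma l1E (l : 'I_n -> R) : l1 l = l ord0.
Proof. by rewrite /l1 (big_pred1 ord0) // => i; rewrite /= val0. Qed.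

Lemma pD (c a b : R) : 0 < c -> powR c (a + b) = powR c a * powR c b.
Proof. by move=> hc; rewrite powRD // (gt_eqF hc) implybT. Qed.

Lemma core (l : 'I_n -> R) (hl : forall i, 0 < l i) (hm : (2 <= m)%N) (mu : R)
  (tau N : fld)
  (htau : smooth_on_torus tau) (htau1 : only_s1 tau)
  (hN : smooth_on_torus N) (hN1 : only_s1 N) (hNpos : forall x, 0 < N x)
  (taus c : R) (hc : 0 < c)
  (hz : intS1 (fun x => N x * tau x) = taus * intS1 N)
  (hmu : forall x, mu + powR c (qexp R n) * (tau x - taus) = powR c (qexp R n) * tau x) :
  let xi := fun x => tau x - taus in
  let q := qexp R n in
  let sigma := scale2 mu (fun _ => 1) (sigma_flat l) in
  let r := powR c ((q - 2) / 2) in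
  exists W : vfield R n,
       (forall i, smooth_on_torus (W i)) /\
       (forall i : 'I_n, (i : nat) <> 0%N -> forall x, W i x = 0) /\
       CTSH (gell l) sigma tau N (fun _ => c) W /\
       (forall i j x, (2 * N x)^-1 * confKilling (gell l) W i j x
                      = scale2 (powR c q) xi (sigma_flat l) i j x) /\
       gen_g (gell l) (fun _ => c) = gell (scaleL r l) /\
       gen_K (gell l) sigma tau N (fun _ => c) W = ds1sq tau (r * l1 l) /\
       constraint_eqs (gen_g (gell l) (fun _ => c))
                      (gen_K (gell l) sigma tau N (fun _ => c) W).
Proof.
move=> xi q sigma r.
set K := powR c q.
have [W0 [sW0 [P0 Pi]]] := core_W mu K htau htau1 hN hN1 hz.
set f := fun x => K * (N x * tau x + - taus * N x) in P0.
pose W : vfield R n := fun i => if i == ord0 then W0 else fun _ => 0.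
have pdW : forall a b x, pd a (W b) x = if (a == ord0) && (b == ord0) then f x else 0.
  move=> a b x; rewrite /W /=; case: (eqVneq b ord0) => [eb|hb].
    subst b; rewrite andbT; case: (eqVneq a ord0) => [ea|ha]; first by subst a; rewrite P0.
    by rewrite (Pi a ha).
  by rewrite andbF pd_cst.
have hl' : forall i, l i != 0 by move=> i; exact: lt0r_neq0.
have n0 : n%:R != 0 :> R by rewrite pnatr_eq0.
have n0' : 1 + m%:R != 0 :> R by rewrite addrC natr1 pnatr_eq0.
have LG : forall i j x, lieg (gell l) W i j x =
    if (i == ord0) && (j == ord0) then 2 * l ord0 ^+ 2 * f x else 0.
  move=> i j x; rewrite /lieg.
  rewrite (eq_bigr (fun k => (if k == j then l k ^+ 2 * pd i (W k) x else 0) +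
                             (if i == k then l i ^+ 2 * pd j (W k) x else 0))); last first.
    move=> k _; rewrite pd_gell /= mulr0 add0r /gell.
    by case: (k == j); case: (i == k); rewrite ?mul0r.
  rewrite big_split /= (sum_only (i := j)); last by move=> k hk; rewrite (negbTE hk).
  rewrite (sum_only (i := i)); last by move=> k hk; rewrite eq_sym (negbTE hk).
  rewrite !eqxx !pdW.
  case: (eqVneq i ord0) => [ei|hi]; case: (eqVneq j ord0) => [ej|hj].
  - by subst i j; rewrite /=; ring.
  - by rewrite /= ?mulr0 ?addr0 ?andbF.
  - by rewrite /= ?mulr0 ?addr0 ?andbF.
  - by rewrite /= ?mulr0 ?addr0 ?andbF.
have DW : forall x, divW (gell l) W x = f x.
  move=> x; rewrite /divW (sum_only (i := ord0)); last by move=> k hk; rewrite pdW (negbTE hk).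
  rewrite pdW eqxx /= big1 ?addr0 // => i _; rewrite big1 // => k _; by rewrite Gamma0 mul0r.
have CK : forall i j x, (2 * N x)^-1 * confKilling (gell l) W i j x
                        = K * xi x * sigma_flat l i j x.
  move=> i j x; rewrite /confKilling LG DW /gell /sigma_flat !val0 /xi /f.
  have hNx := lt0r_neq0 (hNpos x).
  case: (eqVneq i j) => [eij|hij].
    subst j; rewrite ?eqxx ?andbb.
    case: (eqVneq i ord0) => [ei|hi].
      subst i; rewrite ?eqxx /kappa; field; by rewrite ?n0 ?n0' ?hNx.
    rewrite ?(negbTE hi) /=; field; by rewrite ?n0 ?n0' ?hNx.
  rewrite ?(negbTE hij) mulr0 subr0.
  case: (eqVneq i ord0) => [ei|hi]; case: (eqVneq j ord0) => [ej|hj].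
  - by subst; rewrite ?eqxx in hij.
  - by rewrite /= ?mulr0 ?mul0r ?eqxx ?(negbTE hi) ?(negbTE hj) ?(negbTE hij) /= ?mulr0 ?mul0r.
  - by rewrite /= ?mulr0 ?mul0r ?eqxx ?(negbTE hi) ?(negbTE hj) ?(negbTE hij) /= ?mulr0 ?mul0r.
  - by rewrite /= ?mulr0 ?mul0r ?eqxx ?(negbTE hi) ?(negbTE hj) ?(negbTE hij) /= ?mulr0 ?mul0r.
have hmu' : forall x, mu + K * (tau x - taus) = K * tau x := hmu.
have CKf : (fun a b y => (2 * N y)^-1 * confKilling (gell l) W a b y)
         = fun a b y => K * xi y * sigma_flat l a b y.
  by apply/funext => a; apply/funext => b; apply/funext => y; exact: CK.
have Aeq : ctsh_A (gell l) sigma N W = fun a b y => (K * tau y) * sigma_flat l a b y.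
  apply/funext => a; apply/funext => b; apply/funext => y.
  by rewrite /ctsh_A CK /sigma /scale2 /xi -(hmu' y); ring.
have Kpos : 0 < K by exact: powR_gt0.
have I1 : c `^ qexp R n * c `^ qexp R n * c `^ (- qexp R n - 1) = c `^ (qexp R n - 1).
  by rewrite -!pD //; congr (_ `^ _); ring.
have I3 : r ^+ 2 = c `^ (qexp R n - 2).
  by rewrite expr2 /r -pD //; congr (_ `^ _); rewrite /q; field.
have I2 : c `^ (-2) = c `^ (qexp R n - 2) / K.
  apply: (mulIf (lt0r_neq0 Kpos)); rewrite divfK ?lt0r_neq0 // /K /q -pD //.
  by congr (_ `^ _); ring.
have rpos : 0 < r by exact: powR_gt0.
have Gg : gen_g (gell l) (fun _ => c) = gell (scaleL r l).
  apply/funext => i; apply/funext => j; apply/funext => x.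
  rewrite /gen_g /gell /scaleL /=; case: (i == j); last by rewrite mulr0.
  by rewrite exprMn I3.
have GK : gen_K (gell l) sigma tau N (fun _ => c) W = ds1sq tau (r * l1 l).
  apply/funext => i; apply/funext => j; apply/funext => x.
  rewrite /gen_K Aeq /gen_g /ds1sq /gell /sigma_flat !val0 l1E /= I2.
  case: (eqVneq i j) => [eij|hij].
    subst j; rewrite ?eqxx ?andbb.
    case: (eqVneq i ord0) => [ei|hi].
      subst i; rewrite ?eqxx /= -I3 /kappa /K.
      have hl0 := hl' ord0.
      field; by rewrite ?n0 ?n0' ?hl0 ?(lt0r_neq0 Kpos).
    rewrite /= -I3 /K.
    field; by rewrite ?n0 ?n0' ?(lt0r_neq0 Kpos).
  by rewrite /= !mulr0 addr0.
exists W; split.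
  move=> i; rewrite /W; case: (i == ord0) => //; split; first exact: smooth_cst.
  by move=> ? ?.
split.
  move=> i hi x; rewrite /W.
  have : i != ord0 by apply/eqP => e; apply: hi; rewrite e.
  by move=> /negbTE ->.
split.
  split.
    move=> x /=; rewrite lap_cst scal0 Aeq (norm_sigma hl') /K /q.
    move: I1; move: (c `^ qexp R n) (c `^ (- qexp R n - 1)) (c `^ (qexp R n - 1)) => A B C <-.
    ring.
  move=> j x; rewrite CKf (div2_diag hl'); last first.
    move=> a b hab; apply/funext => y; by rewrite /sigma_flat (negbTE hab) mulr0.
  have -> : (fun y => K * xi y * sigma_flat l j j y)
          = fun y => (K * sigma_flat l j j x) * tau y + (- (K * sigma_flat l j j x * taus)).
    by apply/funext => y; rewrite /xi /sigma_flat; ring.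
  rewrite pd_lin; last exact: (smooth_diff x htau.1).
  rewrite /dform /sigma_flat eqxx val0.
  case: (eqVneq j ord0) => [ej|hj].
    subst j; rewrite /=.
    have hl0 := hl' ord0.
    rewrite /K /q; field; by rewrite ?hl0.
  by rewrite (pd_s1 _ htau1 hj) !mulr0.
split; first by move=> i j x; exact: CK.
split; first exact: Gg.
split; first exact: GK.
rewrite Gg GK l1E.
have hrl : forall i, scaleL r l i != 0.
  by move=> i; rewrite /scaleL mulf_neq0 // lt0r_neq0.
exact: (constraint_ds1 hrl htau.1 htau1).
Qed.
End Core.

Unset Implicit Arguments.
Local Close Scope classical_set_scope.

Theorem proposition6p1 (R : realType) (n : nat) (hn : (3 <= n)%N)
  (l : 'I_n -> R) (hl : forall i, 0 < l i) (mu : R)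
  (tau N : pt R n -> R)
  (htau : smooth_on_torus tau) (htau1 : only_s1 tau)
  (hN : smooth_on_torus N) (hN1 : only_s1 N) (hNpos : forall x, 0 < N x) :
  let taus := intS1 (fun x => N x * tau x) / intS1 N in
  let xi := fun x => tau x - taus in
  let q := qexp R n in
  let sigma := scale2 mu (fun _ => 1) (sigma_flat l) in
  (* (1) *)
  (((0 < mu /\ 0 < taus) \/ (mu < 0 /\ taus < 0)) ->
     let c := powR (mu / taus) q^-1 in
     let r := powR c ((q - 2) / 2) in
     exists W : vfield R n,
       (forall i, smooth_on_torus (W i)) /\
       (forall i : 'I_n, (i : nat) <> 0%N -> forall x, W i x = 0) /\
       CTSH (gell l) sigma tau N (fun _ => c) W /\
       (forall i j x, (2 * N x)^-1 * confKilling (gell l) W i j x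
                      = scale2 (powR c q) xi (sigma_flat l) i j x) /\
       gen_g (gell l) (fun _ => c) = gell (scaleL r l) /\
       gen_K (gell l) sigma tau N (fun _ => c) W = ds1sq tau (r * l1 l) /\
       constraint_eqs (gen_g (gell l) (fun _ => c))
                      (gen_K (gell l) sigma tau N (fun _ => c) W) /\
       r = powR (mu / taus) n%:R^-1) /\
  (* (2) *)
  (mu = 0 -> taus = 0 ->
     forall c : R, 0 < c ->
     let r := powR c ((q - 2) / 2) in
     exists W : vfield R n,
       (forall i, smooth_on_torus (W i)) /\
       CTSH (gell l) sigma tau N (fun _ => c) W /\
       (forall i j x, (2 * N x)^-1 * confKilling (gell l) W i j x
                      = scale2 (powR c q) xi (sigma_flat l) i j x) /\
       gen_g (gell l) (fun _ => c) = gell (scaleL r l) /\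
       gen_K (gell l) sigma tau N (fun _ => c) W = ds1sq tau (r * l1 l) /\
       constraint_eqs (gen_g (gell l) (fun _ => c))
                      (gen_K (gell l) sigma tau N (fun _ => c) W)).
Proof.
move: n hn l hl tau N htau htau1 hN hN1 hNpos.
case=> [|m] hn l hl tau N htau htau1 hN hN1 hNpos; first by [].
move=> taus xi q sigma.
have hm : (2 <= m)%N by [].
have n2 : 0 < m.+1%:R - 2 :> R by rewrite subr_gt0 -[2]/(2%:R) ltr_nat.
have n0 : m.+1%:R != 0 :> R by rewrite pnatr_eq0.
have q0 : q != 0.
  rewrite /q /qexp; apply: mulf_neq0; first by rewrite mulf_neq0.
  by rewrite invr_neq0 // lt0r_neq0.
split.
  move=> hsign c r.
  have hpos : 0 < mu / taus.
    case: hsign => [[a b]|[a b]]; first exact: divr_gt0.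
    by rewrite -divrNN divr_gt0 // oppr_gt0.
  have t0 : taus != 0 by apply/eqP => e; move: hpos; rewrite e invr0 mulr0 ltxx.
  have hI : intS1 N != 0.
    by apply/eqP => e; move: t0; rewrite /taus e invr0 mulr0 eqxx.
  have hz : intS1 (fun x => N x * tau x) = taus * intS1 N by rewrite /taus divfK.
  have hc : 0 < c by exact: powR_gt0.
  have Kc : powR c q = mu / taus.
    by rewrite /c -powRrM mulVf // powRr1 // ltW.
  have hmu : forall x, mu + powR c (qexp R m.+1) * (tau x - taus) = powR c (qexp R m.+1) * tau x.
    move=> x; have -> : powR c (qexp R m.+1) = mu / taus := Kc.
    by field.
  case: (core hl hm htau htau1 hN hN1 hNpos hc hz hmu) => W [H1 [H2 [H3 [H4 [H5 [H6 H7]]]]]].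
  exists W; do 7 (split; first by []).
  rewrite /r /c -powRrM; congr (_ `^ _).
  rewrite /q /qexp; field.
  by rewrite addrC natr1 n0 lt0r_neq0 // -[_ + 1]natr1.
move=> mu0 t0 c hc r.
have hIpos : 0 < intS1 N.
  have [A2 dA2] := exists_anti hN.1.
  have -> : intS1 N = A2 1 - A2 0 by exact: (FTC01 (s1_continuous hN.1) dA2).
  exact: (anti_pos dA2 (fun s => hNpos _)).
have hz : intS1 (fun x => N x * tau x) = taus * intS1 N.
  move: t0; rewrite /taus => /eqP; rewrite mulf_eq0 invr_eq0 (negbTE (lt0r_neq0 hIpos)) orbF.
  by move=> /eqP ->; rewrite !mul0r.
have hmu : forall x, mu + powR c (qexp R m.+1) * (tau x - taus) = powR c (qexp R m.+1) * tau x.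
  by move=> x; rewrite mu0 t0 add0r subr0.
case: (core hl hm htau htau1 hN hN1 hNpos hc hz hmu) => W [H1 [H2 [H3 [H4 [H5 [H6 H7]]]]]].
by exists W.
Qed.
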